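(* Let $\theta,\kappa\in\mathbb{F}_{q^3}^*$ with $N(\theta)\neq N(\kappa)$. For any point $P\in\Pi_\kappa$, the projection of $\Pi_\theta$ from $P$ onto $m_T$, i.e. the set $\{PQ\cap m_T: Q\in\Pi_\theta\}$, equals $\mathcal S_{-\kappa\theta}$.
   Context: Let $q$ be a prime power, $\mathbb{F}_{q^3}^*=\mathbb{F}_{q^3}\setminus\{0\}$, $N(x)=x^{q^2+q+1}$. Points of $\mathrm{PG}(2,q^3)$ have homogeneous coordinates $(x,y,z)$ and lines $[a,b,c]$. Let $m_T$ be the line $[0,0,1]$. For $\theta\in\mathbb{F}_{q^3}^*$ let $\mathcal S_\theta=\{(x\theta,x^q,0):x\in\mathbb{F}_{q^3}^*\}$ and $\Pi_\theta=\{(r\theta^{q+1},r^q,r^{q^2}\theta):r\in\mathbb{F}_{q^3}^*\}$. *)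

(* Defs.v *)
From mathcomp Require Import all_boot all_algebra all_field.
Set Implicit Arguments. Unset Strict Implicit. Unset Printing Implicit Defensive.
Import GRing.Theory.
Local Open Scope ring_scope.

Definition prime_power (q : nat) : Prop :=
  exists p k : nat, prime p /\ (0 < k)%N /\ q = (p ^ k)%N.

(* Homogeneous coordinates (x,y,z) of PG(2,F); points are nonzero triples
   up to a nonzero scalar. *)
Definition pt (F : fieldType) := (F * F * F)%type.

Definition is_point (F : fieldType) (u : pt F) : Prop := u != (0, 0, 0).

Definition scale3 (F : fieldType) (c : F) (u : pt F) : pt F :=
  let: (x, y, z) := u in (c * x, c * y, c * z).

Definition proj_eq (F : fieldType) (u v : pt F) : Prop :=
  exists c : F, c != 0 /\ u = scale3 c v.

Definition on_line (F : fieldType) (l u : pt F) : Prop :=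
  let: (a, b, c) := l in let: (x, y, z) := u in a * x + b * y + c * z = 0.

Definition mT (F : fieldType) : pt F := (0, 0, 1).

Definition det3 (F : fieldType) (u v w : pt F) : F :=
  let: (x1, y1, z1) := u in let: (x2, y2, z2) := v in let: (x3, y3, z3) := w in
  x1 * (y2 * z3 - z2 * y3) - y1 * (x2 * z3 - z2 * x3) + z1 * (x2 * y3 - y2 * x3).

Definition collinear (F : fieldType) (u v w : pt F) : Prop := det3 u v w = 0.

Definition Nrm (F : fieldType) (q : nat) (x : F) : F := x ^+ (q ^ 2 + q + 1).

Definition S_set (F : fieldType) (q : nat) (theta : F) (X : pt F) : Prop :=
  exists x : F, x != 0 /\ proj_eq X (x * theta, x ^+ q, 0).

Definition Pi_set (F : fieldType) (q : nat) (theta : F) (X : pt F) : Prop :=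
  exists r : F, r != 0 /\
    proj_eq X (r * theta ^+ (q + 1), r ^+ q, r ^+ (q ^ 2) * theta).

Definition proj_from (F : fieldType) (P : pt F) (A : pt F -> Prop) (X : pt F)
  : Prop :=
  is_point X /\ on_line (mT F) X /\
  exists Q : pt F, A Q /\ ~ proj_eq Q P /\ collinear P Q X.

(* Main.v *)
Require Import Defs.
From mathcomp Require Import all_boot all_algebra all_field.
From mathcomp Require Import ring zify.
Import GRing.Theory.
Local Open Scope ring_scope.

Section Frob.
Variables (F : finFieldType) (q : nat).
Hypothesis hq : prime_power q.
Hypothesis hF : #|F| = (q ^ 3)%N.

Lemma q_pchar : ([pchar F]).-nat q /\ (0 < q)%N.
Proof.
move: hF; case: hq => p [k [pp [k0 ->]]] hF'.
have hc : p \in [pchar F].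
  by apply: (@card_finPcharP F p (k * 3)%N) => //; rewrite hF' expnM.
split; last by rewrite expn_gt0 prime_gt0.
by rewrite (eq_pnat _ (pcharf_eq hc)) pnatX pnat_id.
Qed.

Lemma frobD (x y : F) : (x + y) ^+ q = x ^+ q + y ^+ q.
Proof. by rewrite exprDn_pchar //; case: q_pchar. Qed.
Lemma frobN (x : F) : (- x) ^+ q = - x ^+ q.
Proof. by rewrite exprNn_pchar //; case: q_pchar. Qed.
Lemma frobB (x y : F) : (x - y) ^+ q = x ^+ q - y ^+ q.
Proof. by rewrite frobD frobN. Qed.
Lemma frob0 : (0 : F) ^+ q = 0.
Proof. by have [_ q0] := q_pchar; rewrite expr0n eqn0Ngt q0. Qed.
Lemma frob3 (x : F) : x ^+ q ^+ q ^+ q = x.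
Proof. by rewrite -!exprM -[RHS](expf_card x) hF !expnS expn0 muln1 mulnA. Qed.

Lemma nrm_q (x : F) : Nrm q (x ^+ q) = Nrm q x.
Proof.
rewrite /Nrm -exprM.
have -> : (q * (q ^ 2 + q + 1) = q ^ 3 + (q ^ 2 + q))%N.
  by rewrite !expnS expn0 !muln1; lia.
have h3 := expf_card x; rewrite hF in h3.
by rewrite exprD h3 -exprS addn1.
Qed.

Lemma nrm_q2 (x : F) : Nrm q (x ^+ q ^+ q) = Nrm q x.
Proof. by rewrite !nrm_q. Qed.

Lemma sq (x : F) : x ^+ (q ^ 2) = x ^+ q ^+ q.
Proof. by rewrite -exprM mulnn. Qed.
Lemma sq1 (x : F) : x ^+ (q + 1) = x * x ^+ q.
Proof. by rewrite addn1 exprS. Qed.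

Definition Lf (t k s r : F) := t * r ^+ q ^+ q * s ^+ q - k * s ^+ q ^+ q * r ^+ q.

Lemma Bfrob t k s r :
  (Lf t k s r) ^+ q = t ^+ q * r * s ^+ q ^+ q - k ^+ q * s * r ^+ q ^+ q.
Proof. by rewrite /Lf frobB !exprMn !frob3. Qed.

Lemma det_atoms (c d s s1 s2 k k1 r r1 r2 t t1 x1 x2 : F) :
  det3 (scale3 c (s*(k*k1), s1, s2*k)) (scale3 d (r*(t*t1), r1, r2*t)) (x1,x2,0)
  = c*d*(x1*(t*r2*s1 - k*s2*r1) + x2*(k*t)*(t1*r*s2 - k1*s*r2)).
Proof. rewrite /det3 /scale3 /=. ring. Qed.

Lemma det_id (c d s k r t x1 x2 : F) :
  det3 (scale3 c (s*(k*k^+q), s^+q, s^+q^+q*k))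
       (scale3 d (r*(t*t^+q), r^+q, r^+q^+q*t)) (x1,x2,0)
  = c*d*(x1*Lf t k s r + x2*(k*t)*(Lf t k s r)^+q).
Proof. rewrite Bfrob /Lf; exact: det_atoms. Qed.

Lemma LfB t k s a b : Lf t k s (a - b) = Lf t k s a - Lf t k s b.
Proof. rewrite /Lf !frobB; ring. Qed.

Lemma Lf0 t k s : Lf t k s 0 = 0.
Proof. by rewrite /Lf !frob0 !mulr0 !mul0r subrr. Qed.

Lemma Lf_inj t k s : t != 0 -> k != 0 -> s != 0 -> Nrm q t != Nrm q k ->
  injective (Lf t k s).
Proof.
move=> t0 k0 s0 hN a b hab; apply/eqP; rewrite -subr_eq0; apply/negPn/negP => r0.
have : Lf t k s (a - b) = 0 by rewrite LfB hab subrr.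
move: r0; set r := a - b => r0.
move/eqP; rewrite /Lf subr_eq0 => /eqP /(congr1 (Nrm q)).
rewrite /Nrm !exprMn -!/(Nrm q _) !nrm_q2 !nrm_q => h.
have nr : Nrm q r != 0 by rewrite expf_neq0.
have ns : Nrm q s != 0 by rewrite expf_neq0.
move/eqP: hN; apply.
apply: (mulIf ns); apply: (mulIf nr).
transitivity (Nrm q t * Nrm q r * Nrm q s); first ring.
rewrite h; ring.
Qed.
End Frob.

Lemma scale3A (F : fieldType) (a b : F) u : scale3 a (scale3 b u) = scale3 (a * b) u.
Proof. by case: u => [[x y] z]; rewrite /scale3 !mulrA. Qed.
Lemma scale1_3 (F : fieldType) (u : pt F) : scale3 1 u = u.
Proof. by case: u => [[x y] z]; rewrite /scale3 !mul1r. Qed.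
Lemma col_lemma (F : fieldType) (p1 p2 p3 q1 q2 q3 : F) : p3 != 0 ->
  q3 * p1 - p3 * q1 = 0 -> q3 * p2 - p3 * q2 = 0 -> (q1, q2, q3) = scale3 (q3 / p3) (p1, p2, p3).
Proof.
move=> p0 /eqP; rewrite subr_eq0 => /eqP h1 /eqP; rewrite subr_eq0 => /eqP h2.
rewrite /scale3; congr (_, _, _).
- by rewrite mulrAC h1 mulrC mulKf.
- by rewrite mulrAC h2 mulrC mulKf.
- by rewrite divfK.
Qed.
Lemma col_lemma2 (F : fieldType) (p1 p2 p3 q1 q2 q3 a : F) :
  (q1, q2, q3) = scale3 a (p1, p2, p3) -> q3 * p2 - p3 * q2 = 0.
Proof. by case=> _ -> ->; ring. Qed.

Theorem lemma7p2 (F : finFieldType) (q : nat) (hq : prime_power q)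
  (hF : #|F| = (q ^ 3)%N) (theta kappa : F) :
  theta != 0 -> kappa != 0 -> Nrm q theta != Nrm q kappa ->
  forall P : pt F, Pi_set q kappa P ->
  forall X : pt F, proj_from P (Pi_set q theta) X <-> S_set q (- (kappa * theta)) X.
Proof.
move=> t0 k0 hN P [s [s0 [c [c0 ->]]]] X.
have detE := @det_id F q hq hF.
rewrite !(@sq F q) !(@sq1 F q).
split.
- case: X => [[x1 x2] x3] [hX [hl [Q [[r [r0 [d [d0 ->]]]] [hnp hcol]]]]].
  move: hl; rewrite /on_line /mT !mul0r mul1r !add0r => hx3; subst x3.
  rewrite !(@sq F q) !(@sq1 F q) in hnp hcol.
  move: hcol; rewrite /collinear detE.
  set B := Lf F q theta kappa s r.
  move/eqP; rewrite !mulf_eq0 (negbTE c0) (negbTE d0) /= => /eqP hcol.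
  have B0 : B != 0.
    apply/negP => /eqP hB; apply: hnp.
    have hB' : B ^+ q = 0 by rewrite hB (@frob0 F q hq hF).
    have p30 : s ^+ q ^+ q * kappa != 0 by rewrite mulf_neq0 // !expf_neq0.
    have -> : (r * (theta * theta ^+ q), r ^+ q, r ^+ q ^+ q * theta) =
      scale3 ((r ^+ q ^+ q * theta) / (s ^+ q ^+ q * kappa))
        (s * (kappa * kappa ^+ q), s ^+ q, s ^+ q ^+ q * kappa).
      apply: col_lemma => //.
      + move: hB'; rewrite /B (@Bfrob F q hq hF) => h.
        transitivity (- (kappa * theta) * (theta ^+ q * r * s ^+ q ^+ q - kappa ^+ q * s * r ^+ q ^+ q)); first ring.
        by rewrite h mulr0.
      + by move: hB; rewrite /B /Lf => h; rewrite -h; ring.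
    exists (d * ((r ^+ q ^+ q * theta) / (s ^+ q ^+ q * kappa)) / c).
      split.
        by rewrite !mulf_neq0 ?invr_eq0 ?expf_neq0.
      by rewrite !scale3A divfK.
  have x20 : x2 != 0.
    apply/negP => /eqP hx2; move: hcol; rewrite hx2 !mul0r addr0 => /eqP.
    rewrite mulf_eq0 (negbTE B0) orbF => /eqP hx1.
    by move: hX; rewrite /is_point hx1 hx2 eqxx.
  exists B^-1; split; first by rewrite invr_eq0.
  exists (x2 * B ^+ q); split; first by rewrite mulf_neq0 // expf_neq0.
  have hx1 : x1 = - (x2 * (kappa * theta) * B ^+ q) / B.
    by apply: (mulIf B0); rewrite divfK //; apply/eqP; rewrite -addr_eq0 hcol.
  rewrite /scale3 exprVn hx1; congr (_, _, _).
  + by field.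
  + by rewrite mulfK // expf_neq0.
  + by rewrite mulr0.
- case=> y [y0 [e [e0 ->]]].
  have [g gK Kg] := injF_bij (@Lf_inj F q hq hF theta kappa s t0 k0 s0 hN).
  set r := g y^-1.
  have hr : Lf F q theta kappa s r = y^-1 by rewrite /r Kg.
  have r0 : r != 0.
    apply/negP => /eqP h; move: hr; rewrite h (@Lf0 F q hq hF) => /eqP.
    by rewrite eq_sym invr_eq0 (negbTE y0).
  split.
    apply/eqP; case=> _ /eqP; rewrite mulf_eq0 (negbTE e0) /=.
    by rewrite expf_eq0 (negbTE y0) andbF.
  split; first by rewrite /on_line /mT /=; ring.
  exists (r * (theta * theta ^+ q), r ^+ q, r ^+ q ^+ q * theta).
  split; first by exists r; split => //; exists 1; rewrite !(@sq F q) !(@sq1 F q) scale1_3 oner_neq0.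
  split.
    case=> e' [e'0]; rewrite scale3A => /col_lemma2 h.
    move: hr; have -> : Lf F q theta kappa s r = 0 by rewrite -h /Lf; ring.
    by move/eqP; rewrite eq_sym invr_eq0 (negbTE y0).
  rewrite /collinear -[X in det3 _ X _]scale1_3 /scale3 mulr0.
  rewrite -/(scale3 c _) -/(scale3 1 _) detE hr exprVn.
  field.
  by rewrite expf_neq0.
Qed.
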